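(* Let $g(z)=z^3-z^2+7z+1$, $A=\{z\in\mathbb{C}:\Re z\le0,\ |g(z)|=1\}$ and $B=\{z\in\mathbb{C}:\Re z>0,\ |g(z)|=1\}$. Then $\Re(A)\subset[-0.275,0]$ and $\Re(B)\subset[0.495,0.64]$. Moreover, $z=0$ is the only element $z\in A$ with $\Re(z)=0$. *)

(* Defs.v *)
From Stdlib Require Import Reals.
From Coquelicot Require Import Coquelicot.
Open Scope R_scope.

Definition g (z : C) : C :=
  (z * z * z - z * z + RtoC 7 * z + RtoC 1)%C.

Definition setA (z : C) : Prop := Re z <= 0 /\ Cmod (g z) = 1.
Definition setB (z : C) : Prop := 0 < Re z /\ Cmod (g z) = 1.

(* Main.v *)
Require Import Defs.
From Stdlib Require Import Reals.
From Coquelicot Require Import Coquelicot.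
From Stdlib Require Import Lra Psatz.
Open Scope R_scope.

Definition bb (x : R) := 3*x^2 - 2*x - 13.
Definition cc (x : R) := 3*x^4 - 4*x^3 + 2*x^2 - 20*x + 51.
Definition ww (x : R) := x^3 - x^2 + 7*x.
Definition dd (x : R) := ww x * (ww x + 2).
Definition FF (x t : R) := t^3 + bb x * t^2 + cc x * t + dd x.
Definition qq (x m : R) := 3*m^2 + 2*bb x*m + cc x.
Definition ss (x m : R) := m^3 + bb x*m^2 + cc x*m + dd x.

Lemma F_D x t : 0 <= t -> 0 < 4*cc x - bb x^2 -> 0 < dd x -> 0 < FF x t.
Proof.
  intros Ht HD Hd.
  assert (E : 4*FF x t = t*((2*t+bb x)^2 + (4*cc x - bb x^2)) + 4*dd x)
    by (unfold FF; ring).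
  assert (0 <= t*((2*t+bb x)^2 + (4*cc x - bb x^2))).
  { apply Rmult_le_pos; [lra|]. assert (0 <= (2*t+bb x)^2) by (apply pow2_ge_0). lra. }
  lra.
Qed.

Lemma F_m x t m T0 : 0 <= t -> 0 <= -(bb x + 2*T0) -> 0 < T0^2 + bb x*T0 + cc x ->
  0 < dd x -> 0 < T0 + 2*m + bb x ->
  0 < 4*(T0 + 2*m + bb x)*ss x m - qq x m ^2 -> 0 < FF x t.
Proof.
  intros Ht Hnb HK Hd Hk Hdisc.
  destruct (Rle_lt_dec t T0) as [Hle|Hlt].
  - assert (E1 : t^2 + bb x*t + cc x = (T0^2 + bb x*T0 + cc x) + (T0 - t)*(-(t+T0+bb x)))
      by ring.
    assert (0 <= (T0 - t)*(-(t+T0+bb x))) by (apply Rmult_le_pos; lra).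
    assert (E2 : FF x t = t*(t^2 + bb x*t + cc x) + dd x) by (unfold FF; ring).
    assert (0 <= t*(t^2 + bb x*t + cc x)) by (apply Rmult_le_pos; lra).
    lra.
  - set (k := T0 + 2*m + bb x) in *.
    set (u := t - m).
    assert (E : FF x t = u^2*(u + 3*m + bb x) + qq x m * u + ss x m)
      by (unfold u, FF, qq, ss; ring).
    assert (Hu : 0 <= u^2*((u + 3*m + bb x) - k)).
    { apply Rmult_le_pos; [apply pow2_ge_0|]. unfold u, k. lra. }
    assert (E3 : 4*k*(k*u^2 + qq x m * u + ss x m) = (2*k*u + qq x m)^2 + (4*k*ss x m - qq x m^2))
      by ring.
    assert (0 <= (2*k*u + qq x m)^2) by apply pow2_ge_0.
    assert (0 < k*u^2 + qq x m * u + ss x m).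
    { assert (0 < 4*k*(k*u^2 + qq x m * u + ss x m)) by lra.
      destruct (Rle_lt_dec (k*u^2 + qq x m * u + ss x m) 0) as [Hn|Hp]; [|exact Hp].
      assert (4*k*(k*u^2 + qq x m * u + ss x m) <= 0).
      { assert (0 <= 4*k) by lra.
        assert (0 <= 4*k * (-(k*u^2 + qq x m * u + ss x m))) by (apply Rmult_le_pos; lra).
        lra. }
      lra. }
    lra.
Qed.
Lemma D_03_s : forall s, 0 <= s <= 1 -> 0 < (4*cc ((0) + (3/10)*s) - bb ((0) + (3/10)*s) ^2).
Proof.
  intros s [Hs0 Hs1].
  assert (B0 : 0 <= s^0*(1-s)^5) by (apply Rmult_le_pos; apply pow_le; lra).
  assert (B1 : 0 <= s^1*(1-s)^4) by (apply Rmult_le_pos; apply pow_le; lra).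
  assert (B2 : 0 <= s^2*(1-s)^3) by (apply Rmult_le_pos; apply pow_le; lra).
  assert (B3 : 0 <= s^3*(1-s)^2) by (apply Rmult_le_pos; apply pow_le; lra).
  assert (B4 : 0 <= s^4*(1-s)^1) by (apply Rmult_le_pos; apply pow_le; lra).
  assert (B5 : 0 <= s^5*(1-s)^0) by (apply Rmult_le_pos; apply pow_le; lra).
  assert (E : (4*cc ((0) + (3/10)*s) - bb ((0) + (3/10)*s) ^2) = (35)*(s^0*(1-s)^5) + (677/5)*(s^1*(1-s)^4) + (9949/50)*(s^2*(1-s)^3) + (16804/125)*(s^3*(1-s)^2) + (385483/10000)*(s^4*(1-s)^1) + (26963/10000)*(s^5*(1-s)^0)) by (unfold FF, ss, qq, bb, cc, dd, ww; field).
  assert (S : 1*(s^0*(1-s)^5) + 5*(s^1*(1-s)^4) + 10*(s^2*(1-s)^3) + 10*(s^3*(1-s)^2) + 5*(s^4*(1-s)^1) + 1*(s^5*(1-s)^0) = 1) by ring.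
  rewrite E.
  set (b0 := s^0*(1-s)^5) in *; clearbody b0.
  set (b1 := s^1*(1-s)^4) in *; clearbody b1.
  set (b2 := s^2*(1-s)^3) in *; clearbody b2.
  set (b3 := s^3*(1-s)^2) in *; clearbody b3.
  set (b4 := s^4*(1-s)^1) in *; clearbody b4.
  set (b5 := s^5*(1-s)^0) in *; clearbody b5.
  lra.
Qed.

Lemma D_03 : forall x, (0) <= x <= (3/10) -> 0 < (4*cc x - bb x ^2).
Proof.
  intros x Hx.
  assert (Hx' : x = (0) + (3/10)*((x - (0))/(3/10))) by field.
  rewrite Hx'. apply D_03_s. split; lra.
Qed.

Lemma I1_nb_s : forall s, 0 <= s <= 1 -> 0 < (-(bb ((3/10) + (39/200)*s) + 2*(5))).
Proof.
  intros s [Hs0 Hs1].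
  assert (B0 : 0 <= s^0*(1-s)^3) by (apply Rmult_le_pos; apply pow_le; lra).
  assert (B1 : 0 <= s^1*(1-s)^2) by (apply Rmult_le_pos; apply pow_le; lra).
  assert (B2 : 0 <= s^2*(1-s)^1) by (apply Rmult_le_pos; apply pow_le; lra).
  assert (B3 : 0 <= s^3*(1-s)^0) by (apply Rmult_le_pos; apply pow_le; lra).
  assert (E : (-(bb ((3/10) + (39/200)*s) + 2*(5))) = (333/100)*(s^0*(1-s)^3) + (10029/1000)*(s^1*(1-s)^2) + (398157/40000)*(s^2*(1-s)^1) + (130197/40000)*(s^3*(1-s)^0)) by (unfold FF, ss, qq, bb, cc, dd, ww; field).
  assert (S : 1*(s^0*(1-s)^3) + 3*(s^1*(1-s)^2) + 3*(s^2*(1-s)^1) + 1*(s^3*(1-s)^0) = 1) by ring.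
  rewrite E.
  set (b0 := s^0*(1-s)^3) in *; clearbody b0.
  set (b1 := s^1*(1-s)^2) in *; clearbody b1.
  set (b2 := s^2*(1-s)^1) in *; clearbody b2.
  set (b3 := s^3*(1-s)^0) in *; clearbody b3.
  lra.
Qed.

Lemma I1_nb : forall x, (3/10) <= x <= (99/200) -> 0 < (-(bb x + 2*(5))).
Proof.
  intros x Hx.
  assert (Hx' : x = (3/10) + (39/200)*((x - (3/10))/(39/200))) by field.
  rewrite Hx'. apply I1_nb_s. split; lra.
Qed.

Lemma I1_K_s : forall s, 0 <= s <= 1 -> 0 < ((5)^2 + bb ((3/10) + (39/200)*s) * (5) + cc ((3/10) + (39/200)*s)).
Proof.
  intros s [Hs0 Hs1].
  assert (B0 : 0 <= s^0*(1-s)^5) by (apply Rmult_le_pos; apply pow_le; lra).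
  assert (B1 : 0 <= s^1*(1-s)^4) by (apply Rmult_le_pos; apply pow_le; lra).
  assert (B2 : 0 <= s^2*(1-s)^3) by (apply Rmult_le_pos; apply pow_le; lra).
  assert (B3 : 0 <= s^3*(1-s)^2) by (apply Rmult_le_pos; apply pow_le; lra).
  assert (B4 : 0 <= s^4*(1-s)^1) by (apply Rmult_le_pos; apply pow_le; lra).
  assert (B5 : 0 <= s^5*(1-s)^0) by (apply Rmult_le_pos; apply pow_le; lra).
  assert (E : ((5)^2 + bb ((3/10) + (39/200)*s) * (5) + cc ((3/10) + (39/200)*s)) = (34463/10000)*(s^0*(1-s)^5) + (330577/25000)*(s^1*(1-s)^4) + (38000911/2000000)*(s^2*(1-s)^3) + (242458411/20000000)*(s^3*(1-s)^2) + (4655411683/1600000000)*(s^4*(1-s)^1) + (16619603/1600000000)*(s^5*(1-s)^0)) by (unfold FF, ss, qq, bb, cc, dd, ww; field).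
  assert (S : 1*(s^0*(1-s)^5) + 5*(s^1*(1-s)^4) + 10*(s^2*(1-s)^3) + 10*(s^3*(1-s)^2) + 5*(s^4*(1-s)^1) + 1*(s^5*(1-s)^0) = 1) by ring.
  rewrite E.
  set (b0 := s^0*(1-s)^5) in *; clearbody b0.
  set (b1 := s^1*(1-s)^4) in *; clearbody b1.
  set (b2 := s^2*(1-s)^3) in *; clearbody b2.
  set (b3 := s^3*(1-s)^2) in *; clearbody b3.
  set (b4 := s^4*(1-s)^1) in *; clearbody b4.
  set (b5 := s^5*(1-s)^0) in *; clearbody b5.
  lra.
Qed.

Lemma I1_K : forall x, (3/10) <= x <= (99/200) -> 0 < ((5)^2 + bb x * (5) + cc x).
Proof.
  intros x Hx.
  assert (Hx' : x = (3/10) + (39/200)*((x - (3/10))/(39/200))) by field.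
  rewrite Hx'. apply I1_K_s. split; lra.
Qed.

Lemma I1_kap_s : forall s, 0 <= s <= 1 -> 0 < ((5) + 2*(674683/100000) + bb ((3/10) + (39/200)*s)).
Proof.
  intros s [Hs0 Hs1].
  assert (B0 : 0 <= s^0*(1-s)^3) by (apply Rmult_le_pos; apply pow_le; lra).
  assert (B1 : 0 <= s^1*(1-s)^2) by (apply Rmult_le_pos; apply pow_le; lra).
  assert (B2 : 0 <= s^2*(1-s)^1) by (apply Rmult_le_pos; apply pow_le; lra).
  assert (B3 : 0 <= s^3*(1-s)^0) by (apply Rmult_le_pos; apply pow_le; lra).
  assert (E : ((5) + 2*(674683/100000) + bb ((3/10) + (39/200)*s)) = (258183/50000)*(s^0*(1-s)^3) + (772599/50000)*(s^1*(1-s)^2) + (3105411/200000)*(s^2*(1-s)^1) + (1047747/200000)*(s^3*(1-s)^0)) by (unfold FF, ss, qq, bb, cc, dd, ww; field).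
  assert (S : 1*(s^0*(1-s)^3) + 3*(s^1*(1-s)^2) + 3*(s^2*(1-s)^1) + 1*(s^3*(1-s)^0) = 1) by ring.
  rewrite E.
  set (b0 := s^0*(1-s)^3) in *; clearbody b0.
  set (b1 := s^1*(1-s)^2) in *; clearbody b1.
  set (b2 := s^2*(1-s)^1) in *; clearbody b2.
  set (b3 := s^3*(1-s)^0) in *; clearbody b3.
  lra.
Qed.

Lemma I1_kap : forall x, (3/10) <= x <= (99/200) -> 0 < ((5) + 2*(674683/100000) + bb x).
Proof.
  intros x Hx.
  assert (Hx' : x = (3/10) + (39/200)*((x - (3/10))/(39/200))) by field.
  rewrite Hx'. apply I1_kap_s. split; lra.
Qed.

Lemma I1_disc_s : forall s, 0 <= s <= 1 -> 0 < (4*((5) + 2*(674683/100000) + bb ((3/10) + (39/200)*s))*ss ((3/10) + (39/200)*s) (674683/100000) - qq ((3/10) + (39/200)*s) (674683/100000) ^2).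
Proof.
  intros s [Hs0 Hs1].
  assert (B0 : 0 <= s^0*(1-s)^9) by (apply Rmult_le_pos; apply pow_le; lra).
  assert (B1 : 0 <= s^1*(1-s)^8) by (apply Rmult_le_pos; apply pow_le; lra).
  assert (B2 : 0 <= s^2*(1-s)^7) by (apply Rmult_le_pos; apply pow_le; lra).
  assert (B3 : 0 <= s^3*(1-s)^6) by (apply Rmult_le_pos; apply pow_le; lra).
  assert (B4 : 0 <= s^4*(1-s)^5) by (apply Rmult_le_pos; apply pow_le; lra).
  assert (B5 : 0 <= s^5*(1-s)^4) by (apply Rmult_le_pos; apply pow_le; lra).
  assert (B6 : 0 <= s^6*(1-s)^3) by (apply Rmult_le_pos; apply pow_le; lra).
  assert (B7 : 0 <= s^7*(1-s)^2) by (apply Rmult_le_pos; apply pow_le; lra).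
  assert (B8 : 0 <= s^8*(1-s)^1) by (apply Rmult_le_pos; apply pow_le; lra).
  assert (B9 : 0 <= s^9*(1-s)^0) by (apply Rmult_le_pos; apply pow_le; lra).
  assert (E : (4*((5) + 2*(674683/100000) + bb ((3/10) + (39/200)*s))*ss ((3/10) + (39/200)*s) (674683/100000) - qq ((3/10) + (39/200)*s) (674683/100000) ^2) = (26153239018918475060879/100000000000000000000)*(s^0*(1-s)^9) + (196237875534915227947911/100000000000000000000)*(s^1*(1-s)^8) + (160256560659765773520411/25000000000000000000)*(s^2*(1-s)^7) + (297440653989121076038209/25000000000000000000)*(s^3*(1-s)^6) + (2742419218794897295428183/200000000000000000000)*(s^4*(1-s)^5) + (2008377247667775816734883/200000000000000000000)*(s^5*(1-s)^4) + (228221087087702291202543/50000000000000000000)*(s^6*(1-s)^3) + (59129409208089057739947/50000000000000000000)*(s^7*(1-s)^2) + (221014618498546851797451/1600000000000000000000)*(s^8*(1-s)^1) + (3147922328454744815339/1600000000000000000000)*(s^9*(1-s)^0)) by (unfold FF, ss, qq, bb, cc, dd, ww; field).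
  assert (S : 1*(s^0*(1-s)^9) + 9*(s^1*(1-s)^8) + 36*(s^2*(1-s)^7) + 84*(s^3*(1-s)^6) + 126*(s^4*(1-s)^5) + 126*(s^5*(1-s)^4) + 84*(s^6*(1-s)^3) + 36*(s^7*(1-s)^2) + 9*(s^8*(1-s)^1) + 1*(s^9*(1-s)^0) = 1) by ring.
  rewrite E.
  set (b0 := s^0*(1-s)^9) in *; clearbody b0.
  set (b1 := s^1*(1-s)^8) in *; clearbody b1.
  set (b2 := s^2*(1-s)^7) in *; clearbody b2.
  set (b3 := s^3*(1-s)^6) in *; clearbody b3.
  set (b4 := s^4*(1-s)^5) in *; clearbody b4.
  set (b5 := s^5*(1-s)^4) in *; clearbody b5.
  set (b6 := s^6*(1-s)^3) in *; clearbody b6.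
  set (b7 := s^7*(1-s)^2) in *; clearbody b7.
  set (b8 := s^8*(1-s)^1) in *; clearbody b8.
  set (b9 := s^9*(1-s)^0) in *; clearbody b9.
  lra.
Qed.

Lemma I1_disc : forall x, (3/10) <= x <= (99/200) -> 0 < (4*((5) + 2*(674683/100000) + bb x)*ss x (674683/100000) - qq x (674683/100000) ^2).
Proof.
  intros x Hx.
  assert (Hx' : x = (3/10) + (39/200)*((x - (3/10))/(39/200))) by field.
  rewrite Hx'. apply I1_disc_s. split; lra.
Qed.

Lemma I2_nb_s : forall s, 0 <= s <= 1 -> 0 < (-(bb ((16/25) + (34/25)*s) + 2*(249/100))).
Proof.
  intros s [Hs0 Hs1].
  assert (B0 : 0 <= s^0*(1-s)^3) by (apply Rmult_le_pos; apply pow_le; lra).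
  assert (B1 : 0 <= s^1*(1-s)^2) by (apply Rmult_le_pos; apply pow_le; lra).
  assert (B2 : 0 <= s^2*(1-s)^1) by (apply Rmult_le_pos; apply pow_le; lra).
  assert (B3 : 0 <= s^3*(1-s)^0) by (apply Rmult_le_pos; apply pow_le; lra).
  assert (E : (-(bb ((16/25) + (34/25)*s) + 2*(249/100))) = (10089/1250)*(s^0*(1-s)^3) + (27139/1250)*(s^1*(1-s)^2) + (683/50)*(s^2*(1-s)^1) + (1/50)*(s^3*(1-s)^0)) by (unfold FF, ss, qq, bb, cc, dd, ww; field).
  assert (S : 1*(s^0*(1-s)^3) + 3*(s^1*(1-s)^2) + 3*(s^2*(1-s)^1) + 1*(s^3*(1-s)^0) = 1) by ring.
  rewrite E.
  set (b0 := s^0*(1-s)^3) in *; clearbody b0.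
  set (b1 := s^1*(1-s)^2) in *; clearbody b1.
  set (b2 := s^2*(1-s)^1) in *; clearbody b2.
  set (b3 := s^3*(1-s)^0) in *; clearbody b3.
  lra.
Qed.

Lemma I2_nb : forall x, (16/25) <= x <= (2) -> 0 < (-(bb x + 2*(249/100))).
Proof.
  intros x Hx.
  assert (Hx' : x = (16/25) + (34/25)*((x - (16/25))/(34/25))) by field.
  rewrite Hx'. apply I2_nb_s. split; lra.
Qed.

Lemma I2_K_s : forall s, 0 <= s <= 1 -> 0 < ((249/100)^2 + bb ((16/25) + (34/25)*s) * (249/100) + cc ((16/25) + (34/25)*s)).
Proof.
  intros s [Hs0 Hs1].
  assert (B0 : 0 <= s^0*(1-s)^5) by (apply Rmult_le_pos; apply pow_le; lra).
  assert (B1 : 0 <= s^1*(1-s)^4) by (apply Rmult_le_pos; apply pow_le; lra).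
  assert (B2 : 0 <= s^2*(1-s)^3) by (apply Rmult_le_pos; apply pow_le; lra).
  assert (B3 : 0 <= s^3*(1-s)^2) by (apply Rmult_le_pos; apply pow_le; lra).
  assert (B4 : 0 <= s^4*(1-s)^1) by (apply Rmult_le_pos; apply pow_le; lra).
  assert (B5 : 0 <= s^5*(1-s)^0) by (apply Rmult_le_pos; apply pow_le; lra).
  assert (E : ((249/100)^2 + bb ((16/25) + (34/25)*s) * (249/100) + cc ((16/25) + (34/25)*s)) = (76103453/6250000)*(s^0*(1-s)^5) + (256180353/6250000)*(s^1*(1-s)^4) + (7392177/125000)*(s^2*(1-s)^3) + (7812689/125000)*(s^3*(1-s)^2) + (121853/2000)*(s^4*(1-s)^1) + (287501/10000)*(s^5*(1-s)^0)) by (unfold FF, ss, qq, bb, cc, dd, ww; field).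
  assert (S : 1*(s^0*(1-s)^5) + 5*(s^1*(1-s)^4) + 10*(s^2*(1-s)^3) + 10*(s^3*(1-s)^2) + 5*(s^4*(1-s)^1) + 1*(s^5*(1-s)^0) = 1) by ring.
  rewrite E.
  set (b0 := s^0*(1-s)^5) in *; clearbody b0.
  set (b1 := s^1*(1-s)^4) in *; clearbody b1.
  set (b2 := s^2*(1-s)^3) in *; clearbody b2.
  set (b3 := s^3*(1-s)^2) in *; clearbody b3.
  set (b4 := s^4*(1-s)^1) in *; clearbody b4.
  set (b5 := s^5*(1-s)^0) in *; clearbody b5.
  lra.
Qed.

Lemma I2_K : forall x, (16/25) <= x <= (2) -> 0 < ((249/100)^2 + bb x * (249/100) + cc x).
Proof.
  intros x Hx.
  assert (Hx' : x = (16/25) + (34/25)*((x - (16/25))/(34/25))) by field.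
  rewrite Hx'. apply I2_K_s. split; lra.
Qed.

Lemma I2_kap_s : forall s, 0 <= s <= 1 -> 0 < ((249/100) + 2*(682049/100000) + bb ((16/25) + (34/25)*s)).
Proof.
  intros s [Hs0 Hs1].
  assert (B0 : 0 <= s^0*(1-s)^3) by (apply Rmult_le_pos; apply pow_le; lra).
  assert (B1 : 0 <= s^1*(1-s)^2) by (apply Rmult_le_pos; apply pow_le; lra).
  assert (B2 : 0 <= s^2*(1-s)^1) by (apply Rmult_le_pos; apply pow_le; lra).
  assert (B3 : 0 <= s^3*(1-s)^0) by (apply Rmult_le_pos; apply pow_le; lra).
  assert (E : ((249/100) + 2*(682049/100000) + bb ((16/25) + (34/25)*s)) = (153989/50000)*(s^0*(1-s)^3) + (587087/50000)*(s^1*(1-s)^2) + (989647/50000)*(s^2*(1-s)^1) + (556549/50000)*(s^3*(1-s)^0)) by (unfold FF, ss, qq, bb, cc, dd, ww; field).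
  assert (S : 1*(s^0*(1-s)^3) + 3*(s^1*(1-s)^2) + 3*(s^2*(1-s)^1) + 1*(s^3*(1-s)^0) = 1) by ring.
  rewrite E.
  set (b0 := s^0*(1-s)^3) in *; clearbody b0.
  set (b1 := s^1*(1-s)^2) in *; clearbody b1.
  set (b2 := s^2*(1-s)^1) in *; clearbody b2.
  set (b3 := s^3*(1-s)^0) in *; clearbody b3.
  lra.
Qed.

Lemma I2_kap : forall x, (16/25) <= x <= (2) -> 0 < ((249/100) + 2*(682049/100000) + bb x).
Proof.
  intros x Hx.
  assert (Hx' : x = (16/25) + (34/25)*((x - (16/25))/(34/25))) by field.
  rewrite Hx'. apply I2_kap_s. split; lra.
Qed.

Lemma I2_disc_s : forall s, 0 <= s <= 1 -> 0 < (4*((249/100) + 2*(682049/100000) + bb ((16/25) + (34/25)*s))*ss ((16/25) + (34/25)*s) (682049/100000) - qq ((16/25) + (34/25)*s) (682049/100000) ^2).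
Proof.
  intros s [Hs0 Hs1].
  assert (B0 : 0 <= s^0*(1-s)^9) by (apply Rmult_le_pos; apply pow_le; lra).
  assert (B1 : 0 <= s^1*(1-s)^8) by (apply Rmult_le_pos; apply pow_le; lra).
  assert (B2 : 0 <= s^2*(1-s)^7) by (apply Rmult_le_pos; apply pow_le; lra).
  assert (B3 : 0 <= s^3*(1-s)^6) by (apply Rmult_le_pos; apply pow_le; lra).
  assert (B4 : 0 <= s^4*(1-s)^5) by (apply Rmult_le_pos; apply pow_le; lra).
  assert (B5 : 0 <= s^5*(1-s)^4) by (apply Rmult_le_pos; apply pow_le; lra).
  assert (B6 : 0 <= s^6*(1-s)^3) by (apply Rmult_le_pos; apply pow_le; lra).
  assert (B7 : 0 <= s^7*(1-s)^2) by (apply Rmult_le_pos; apply pow_le; lra).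
  assert (B8 : 0 <= s^8*(1-s)^1) by (apply Rmult_le_pos; apply pow_le; lra).
  assert (B9 : 0 <= s^9*(1-s)^0) by (apply Rmult_le_pos; apply pow_le; lra).
  assert (E : (4*((249/100) + 2*(682049/100000) + bb ((16/25) + (34/25)*s))*ss ((16/25) + (34/25)*s) (682049/100000) - qq ((16/25) + (34/25)*s) (682049/100000) ^2) = (284501365375888799/100000000000000000000)*(s^0*(1-s)^9) + (48064387016742750128791/100000000000000000000)*(s^1*(1-s)^8) + (223453173895407446832791/25000000000000000000)*(s^2*(1-s)^7) + (1352245444675903685063179/25000000000000000000)*(s^3*(1-s)^6) + (8434350318761200761557537/50000000000000000000)*(s^4*(1-s)^5) + (15683769982463020372898337/50000000000000000000)*(s^5*(1-s)^4) + (9121061556565738167751179/25000000000000000000)*(s^6*(1-s)^3) + (6557596547500764536624791/25000000000000000000)*(s^7*(1-s)^2) + (10719915725761885123504791/100000000000000000000)*(s^8*(1-s)^1) + (1911703248980778098167199/100000000000000000000)*(s^9*(1-s)^0)) by (unfold FF, ss, qq, bb, cc, dd, ww; field).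
  assert (S : 1*(s^0*(1-s)^9) + 9*(s^1*(1-s)^8) + 36*(s^2*(1-s)^7) + 84*(s^3*(1-s)^6) + 126*(s^4*(1-s)^5) + 126*(s^5*(1-s)^4) + 84*(s^6*(1-s)^3) + 36*(s^7*(1-s)^2) + 9*(s^8*(1-s)^1) + 1*(s^9*(1-s)^0) = 1) by ring.
  rewrite E.
  set (b0 := s^0*(1-s)^9) in *; clearbody b0.
  set (b1 := s^1*(1-s)^8) in *; clearbody b1.
  set (b2 := s^2*(1-s)^7) in *; clearbody b2.
  set (b3 := s^3*(1-s)^6) in *; clearbody b3.
  set (b4 := s^4*(1-s)^5) in *; clearbody b4.
  set (b5 := s^5*(1-s)^4) in *; clearbody b5.
  set (b6 := s^6*(1-s)^3) in *; clearbody b6.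
  set (b7 := s^7*(1-s)^2) in *; clearbody b7.
  set (b8 := s^8*(1-s)^1) in *; clearbody b8.
  set (b9 := s^9*(1-s)^0) in *; clearbody b9.
  lra.
Qed.

Lemma I2_disc : forall x, (16/25) <= x <= (2) -> 0 < (4*((249/100) + 2*(682049/100000) + bb x)*ss x (682049/100000) - qq x (682049/100000) ^2).
Proof.
  intros x Hx.
  assert (Hx' : x = (16/25) + (34/25)*((x - (16/25))/(34/25))) by field.
  rewrite Hx'. apply I2_disc_s. split; lra.
Qed.

Lemma reduce (x y : R) : Cmod (g (x,y)) = 1 -> FF x (y^2) = 0.
Proof.
  intros H. unfold Cmod, g in H. simpl in H.
  match type of H with sqrt ?e0 = 1 => set (e := e0) in H end.
  assert (He : e = 1).
  { assert (Hnn : 0 <= e).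
    { apply Rplus_le_le_0_compat; rewrite Rmult_1_r; apply Rle_0_sqr. }
    pose proof (sqrt_sqrt e Hnn) as Hs. rewrite H in Hs. lra. }
  unfold e in He. unfold FF, bb, cc, dd, ww. nra.
Qed.

Lemma D_neg x : x <= 0 -> 0 < 4*cc x - bb x ^2.
Proof. intros. unfold cc, bb. nra. Qed.

Lemma D_big x : 2 <= x -> 0 < 4*cc x - bb x ^2.
Proof.
  intros. set (h := x - 2).
  assert (E : 4*cc x - bb x ^2 = 115 + 244*h + 130*h^2 + 20*h^3 + 3*h^4)
    by (unfold h, cc, bb; ring).
  assert (0 <= h) by (unfold h; lra).
  rewrite E. assert (0 <= h^2) by nra. assert (0 <= h^3) by (apply pow_le; lra).
  assert (0 <= h^4) by (apply pow_le; lra). lra.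
Qed.

Lemma dd_pos x : 0 < x -> 0 < dd x.
Proof.
  intros. unfold dd, ww.
  assert (0 < x^3 - x^2 + 7*x).
  { replace (x^3 - x^2 + 7*x) with (x*((x-1/2)^2 + 27/4)) by field.
    apply Rmult_lt_0_compat; [lra|]. assert (0 <= (x-1/2)^2) by apply pow2_ge_0. lra. }
  nra.
Qed.

Lemma dd_neg x : x < -275/1000 -> 0 < dd x.
Proof.
  intros. unfold dd, ww.
  assert (x^3 - x^2 + 7*x + 2 < 0).
  { assert (E : x^3 - x^2 + 7*x + 2 = (x + 275/1000)*(x^2 - (1275/1000)*x + 7 + 350625/1000000)
        + (-(275/1000)^3 - (275/1000)^2 - 7*(275/1000) + 2)) by field.
    rewrite E.
    assert (0 < x^2 - (1275/1000)*x + 7 + 350625/1000000) by nra.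
    assert ((x + 275/1000)*(x^2 - (1275/1000)*x + 7 + 350625/1000000) < 0).
    { assert (0 < (-(x + 275/1000))*(x^2 - (1275/1000)*x + 7 + 350625/1000000))
        by (apply Rmult_lt_0_compat; lra). lra. }
    lra. }
  nra.
Qed.

Theorem lemma3p6 :
  (forall z : C, setA z -> -275/1000 <= Re z <= 0) /\
  (forall z : C, setB z -> 495/1000 <= Re z <= 64/100) /\
  (forall z : C, setA z -> Re z = 0 -> z = 0%C).
Proof.
  assert (Ht : forall y : R, 0 <= y^2) by (intros; apply pow2_ge_0).
  split; [|split].
  - intros [x y] [H1 H2]. simpl in H1. simpl. apply reduce in H2.
    split; [|exact H1].
    destruct (Rlt_le_dec x (-275/1000)) as [Hl|Hl]; [|exact Hl].
    exfalso. assert (0 < FF x (y^2)) by (apply F_D; [apply Ht|apply D_neg; lra|apply dd_neg; lra]).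
    lra.
  - intros [x y] [H1 H2]. simpl in H1. simpl. apply reduce in H2.
    split.
    + destruct (Rlt_le_dec x (495/1000)) as [Hl|Hl]; [exfalso|exact Hl].
      destruct (Rle_lt_dec x (3/10)) as [Hs|Hs].
      * assert (0 < FF x (y^2)) by (apply F_D; [apply Ht|apply D_03; lra|apply dd_pos; lra]).
        lra.
      * assert (0 < FF x (y^2)).
        { apply (F_m x (y^2) (674683/100000) 5); [apply Ht| | | apply dd_pos; lra | |].
          - apply Rlt_le, I1_nb; lra.
          - apply I1_K; lra.
          - apply I1_kap; lra.
          - apply I1_disc; lra. }
        lra.
    + destruct (Rle_lt_dec x (64/100)) as [Hl|Hl]; [exact Hl|exfalso].
      destruct (Rle_lt_dec x 2) as [Hs|Hs].
      * assert (0 < FF x (y^2)).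
        { apply (F_m x (y^2) (682049/100000) (249/100)); [apply Ht| | | apply dd_pos; lra | |].
          - apply Rlt_le, I2_nb; lra.
          - apply I2_K; lra.
          - apply I2_kap; lra.
          - apply I2_disc; lra. }
        lra.
      * assert (0 < FF x (y^2)) by (apply F_D; [apply Ht|apply D_big; lra|apply dd_pos; lra]).
        lra.
  - intros [x y] [H1 H2] H0. simpl in H0. subst x. apply reduce in H2.
    unfold FF, bb, cc, dd, ww in H2.
    assert (E : y^2 * ((y^2 - 13/2)^2 + 35/4) = 0) by (rewrite <- H2; field).
    apply Rmult_integral in E. destruct E as [E|E].
    + assert (y = 0) by nra. subst y. reflexivity.
    + assert (0 <= (y^2 - 13/2)^2) by apply pow2_ge_0. lra.
Qed.
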